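(* Let $\Omega$ be a Stone signature and let $\mathcal S$ be an arbitrary Stone pseudovariety of $\Omega$-algebras. Let $\varphi:S\to T$ be an onto continuous homomorphism of Stone topological $\Omega$-algebras where $S$ is residually $\mathcal S$. Then $T$ is also residually $\mathcal S$.
   Context: A Stone signature is $\Omega=\biguplus_n\Omega_n$ with each $\Omega_n$ a compact Hausdorff 0-dimensional space. A Stone topological $\Omega$-algebra is a compact Hausdorff 0-dimensional space $A$ with continuous evaluation maps $\Omega_n\times A^n\to A$. A Stone pseudovariety is a nonempty class of Stone topological $\Omega$-algebras closed under images by onto continuous homomorphisms that are Stone topological algebras, closed subalgebras, and finite direct products. An algebra is residually $\mathcal S$ if any two distinct elements are separated by a continuous homomorphism into a member of $\mathcal S$. *)

(* Defs.v *)
From HB Require Import structures.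
From mathcomp Require Import all_boot all_order.
From mathcomp Require Import all_classical all_reals all_analysis.
Set Implicit Arguments. Unset Strict Implicit. Unset Printing Implicit Defensive.
Local Open Scope classical_set_scope.

Definition zero_dim (T : topologicalType) : Prop :=
  forall (x : T) (U : set T), open U -> U x ->
    exists V : set T, [/\ clopen V, V x & V `<=` U].

Definition stone_space (T : topologicalType) : Prop :=
  [/\ compact [set: T], hausdorff_space T & zero_dim T].

(* A Stone signature is Omega = disjoint union of the Omega n, n : nat, each
   a Stone space; we represent it by the family Omega : nat -> topologicalType. *)

(* A topological Omega-algebra: a space with evaluation maps
   Omega n x A^n -> A ; A^n is 'I_n -> A, topologized by the
   product topology {ptws 'I_n -> A} in stone_alg. *)
Record talg (Omega : nat -> topologicalType) := TAlg {
  car :> topologicalType;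
  ops : forall n, Omega n -> ('I_n -> car) -> car }.

Definition stone_alg Omega (A : talg Omega) : Prop :=
  stone_space A /\
  forall n, continuous (fun p : Omega n * {ptws 'I_n -> car A} => @ops Omega A n p.1 p.2).

Definition is_hom Omega (A B : talg Omega) (f : A -> B) : Prop :=
  forall n (w : Omega n) (a : 'I_n -> A), f (@ops Omega A n w a) = @ops Omega B n w (f \o a).

Definition prod_alg Omega (I : finType) (A : I -> talg Omega) : talg Omega :=
  @TAlg Omega (prod_topology (fun i : I => car (A i)) : topologicalType)
    (fun n w a => fun i => @ops Omega (A i) n w (fun k => a k i)).

(* Closure under closed subalgebras is expressed via
   injective continuous homomorphisms from Stone algebras (their images are
   exactly the closed subalgebras, up to isomorphism). *)
Definition stone_pseudovariety Omega (S : talg Omega -> Prop) : Prop :=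
  [/\ exists A, S A,
      forall A, S A -> stone_alg A,
      forall (A B : talg Omega) (f : A -> B), S A -> stone_alg B ->
        is_hom f -> continuous f -> (forall y, exists x, f x = y) -> S B,
      forall (A B : talg Omega) (f : B -> A), S A -> stone_alg B ->
        is_hom f -> continuous f -> injective f -> S B
    & forall (I : finType) (A : I -> talg Omega),
        (forall i, S (A i)) -> S (prod_alg A)].

Definition residually Omega (S : talg Omega -> Prop) (A : talg Omega) : Prop :=
  forall x y : A, x <> y ->
    exists (B : talg Omega) (f : A -> B),
      [/\ S B, is_hom f, continuous f & f x <> f y].

(* Main.v *)
Require Import Defs.
From mathcomp Require Import all_boot all_order.
From mathcomp Require Import all_classical all_reals all_analysis.
From HB Require Import structures.
Set Implicit Arguments. Unset Strict Implicit. Unset Printing Implicit Defensive.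
Local Open Scope classical_set_scope.
Lemma closed_map_factor (X Y Z : topologicalType) (q : X -> Y) (h : Y -> Z) :
  compact [set: X] -> hausdorff_space Y -> continuous q ->
  (forall y, exists x, q x = y) -> continuous (h \o q) -> continuous h.
Proof.
move=> cX hY cq sq chq; apply/continuous_closedP => F cF.
have -> : h @^-1` F = q @` ((h \o q) @^-1` F).
  apply/seteqP; split=> [y Fy|_ [x Fx <-]] //.
  by have [x qx] := sq y; exists x => //=; rewrite qx.
apply: compact_closed => //; apply: continuous_compact.
  exact: continuous_subspaceT.
apply: (subclosed_compact _ cX) => //.
exact: (continuous_closedP _).1.
Qed.
Lemma cont_into_prod (X : topologicalType) (I : Type) (K : I -> topologicalType)
  (f : X -> prod_topology K) : (forall i, continuous (fun x => f x i)) -> continuous f.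
Proof.
move=> cf x.
have := @cvg_sup _ _ (fun i => Topological.class
    (initial_topology (fun g : (forall i, K i) => g i))) (f @ x) (f x) _.
move=> [_ H]; apply: H => i.
have := @continuous_comp_initial (forall i, K i) X (K i) (fun g => g i) f.
by move=> /(_ (cf i)); apply.
Qed.
Lemma fst_cont (T U : topologicalType) : continuous (@fst T U).
Proof. by move=> [a b]; exact: cvg_fst. Qed.
Lemma snd_cont (T U : topologicalType) : continuous (@snd T U).
Proof. by move=> [a b]; exact: cvg_snd. Qed.
Lemma pair_cont (X T U : topologicalType) (f : X -> T) (g : X -> U) :
  continuous f -> continuous g -> continuous (fun x => (f x, g x)).
Proof. by move=> cf cg x; apply: cvg_pair; [exact: cf|exact: cg]. Qed.

Lemma pair_hausdorff (T U : topologicalType) :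
  hausdorff_space T -> hausdorff_space U -> hausdorff_space (T * U)%type.
Proof.
rewrite !open_hausdorff => hT hU [a b] [c d] ne.
have [ac|ac] := eqVneq a c.
  have bd : b != d by apply: contraNneq ne => ->; rewrite ac.
  have [[P Q] /= [Pb Qd] [oP oQ /eqP PQ]] := hU _ _ bd.
  exists (snd @^-1` P, snd @^-1` Q) => /=.
    by split; rewrite inE; [move/set_mem: Pb|move/set_mem: Qd].
  split; [exact: (continuousP _).1 (@snd_cont T U) _ oP|
          exact: (continuousP _).1 (@snd_cont T U) _ oQ|].
  apply/eqP; rewrite -preimage_setI PQ; exact: preimage_set0.
have [[P Q] /= [Pb Qd] [oP oQ /eqP PQ]] := hT _ _ ac.
exists (fst @^-1` P, fst @^-1` Q) => /=.
  by split; rewrite inE; [move/set_mem: Pb|move/set_mem: Qd].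
split; [exact: (continuousP _).1 (@fst_cont T U) _ oP|
        exact: (continuousP _).1 (@fst_cont T U) _ oQ|].
apply/eqP; rewrite -preimage_setI PQ; exact: preimage_set0.
Qed.
Lemma zd_to_zero_dim (T : topologicalType) :
  compact [set: T] -> hausdorff_space T -> zero_dimensional T -> zero_dim T.
Proof.
move=> cT hT zT x U oU Ux.
have := @zero_dimensional_cvg T x hT zT cT.
move=> /(_ U); rewrite nbhs_simpl => /(_ (open_nbhs_nbhs (conj oU Ux))).
by move=> [D [Dx cD] DU]; exists D.
Qed.

Lemma compact_ptws (n : nat) (T : topologicalType) :
  compact [set: T] -> compact [set: {ptws 'I_n -> T}].
Proof.
move=> cT.
have := @tychonoff 'I_n (fun _ => T) (fun _ => setT) (fun _ => cT).
by congr compact; apply/seteqP; split.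
Qed.

Lemma compact_pairT (T U : topologicalType) :
  compact [set: T] -> compact [set: U] -> compact [set: (T * U)%type].
Proof.
move=> cT cU; have := compact_setX cT cU.
by congr compact; apply/seteqP; split.
Qed.
Section Image.
Variable Omega : nat -> topologicalType.
Variable A : talg Omega.
Variable X : topologicalType.
Variable k : A -> X.
Hypothesis kcong : forall n (w : Omega n) (a b : 'I_n -> A),
  (forall i, k (a i) = k (b i)) -> k (ops w a) = k (ops w b).

Definition ImT : topologicalType := set_type (range k).

Definition kI (x : A) : ImT := SigSub (mem_set (imageT k x)).

Definition liftI (y : ImT) : A := projT1 (cid2 (set_valP y)).

Lemma kI_val x : set_val (kI x) = k x. Proof. by []. Qed.

Lemma liftI_spec y : k (liftI y) = set_val y.
Proof. by rewrite /liftI; case: cid2. Qed.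

Lemma kI_lift y : kI (liftI y) = y.
Proof. by apply: val_inj; rewrite /= liftI_spec. Qed.

Definition ImA : talg Omega :=
  @TAlg Omega ImT (fun n w a => kI (ops w (liftI \o a))).

Lemma kI_hom : is_hom (A := A) (B := ImA) kI.
Proof.
move=> n w a /=; apply: val_inj => /=; apply: kcong => i /=.
by rewrite liftI_spec.
Qed.

Lemma kI_onto y : exists x, kI x = y.
Proof. by exists (liftI y); exact: kI_lift. Qed.

Lemma kI_cont : continuous k -> continuous kI.
Proof.
move=> ck; apply: (@continuous_comp_initial _ _ _ set_val).
exact: ck.
Qed.

Lemma val_cont : continuous (set_val : ImT -> X).
Proof. exact: initial_continuous. Qed.

Lemma val_injI : injective (set_val : ImT -> X).
Proof. exact: val_inj. Qed.


Lemma cont_comp (T U V : topologicalType) (f : T -> U) (g : U -> V) :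
  continuous f -> continuous g -> continuous (g \o f).
Proof. by move=> cf cg x; apply: continuous_comp; [exact: cf|exact: cg]. Qed.

Lemma proj_cont (I : eqType) (T : topologicalType) (i : I) :
  continuous (fun f : {ptws I -> T} => f i).
Proof. exact: (@proj_continuous I (fun _ => T) i). Qed.

Lemma hausdorff_ptws (n : nat) (T : topologicalType) :
  hausdorff_space T -> hausdorff_space {ptws 'I_n -> T}.
Proof. move=> hT; have := @hausdorff_product 'I_n (fun _ => T) (fun _ => hT); exact. Qed.

Lemma ImA_stone : (forall n, stone_space (Omega n)) -> stone_alg A ->
  hausdorff_space X -> zero_dimensional X -> continuous k -> stone_alg ImA.
Proof.
move=> HO [[cA hA zA] opsA] hX zX ck.
have cI : compact [set: ImT].
  have -> : [set: ImT] = kI @` setT.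
    by apply/seteqP; split => // y _; have [x <-] := kI_onto y; exists x.
  apply: continuous_compact => //; exact/continuous_subspaceT/kI_cont.
have hI : hausdorff_space ImT.
  rewrite open_hausdorff => x y xy.
  have vxy : set_val x != set_val y by apply: contra_neq xy; exact: val_injI.
  move: hX; rewrite open_hausdorff => /(_ _ _ vxy) [[P Q] /= [Px Qy] [oP oQ /eqP PQ]].
  exists (set_val @^-1` P, set_val @^-1` Q) => /=.
    by split; rewrite inE; [move/set_mem: Px|move/set_mem: Qy].
  split; [exact: (continuousP _).1 val_cont _ oP|
          exact: (continuousP _).1 val_cont _ oQ|].
  by apply/eqP; rewrite -preimage_setI PQ; exact: preimage_set0.
have zI : zero_dimensional ImT.
  move=> x y xy.
  have vxy : set_val x != set_val y by apply: contra_neq xy; exact: val_injI.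
  have [U [cU Ux Uy]] := zX _ _ vxy.
  exists (set_val @^-1` U); split => //; exact: preimage_clopen cU val_cont.
split; first by split => //; exact: zd_to_zero_dim.
move=> n.
pose q := fun p : (Omega n * {ptws 'I_n -> A})%type =>
   (p.1, (kI \o p.2 : {ptws 'I_n -> ImT})).
have [cO hO _] := HO n.
apply: (@closed_map_factor _ _ _ q).
- apply: compact_pairT => //; exact: compact_ptws.
- apply: pair_hausdorff => //; exact: hausdorff_ptws.
- apply: pair_cont; first exact: fst_cont.
  apply: cont_into_prod => i /=.
  apply: (@cont_comp _ _ _ (fun p : (Omega n * {ptws 'I_n -> A})%type => p.2 i) kI); last exact: kI_cont.
  apply: (@cont_comp _ _ _ snd (fun f : {ptws 'I_n -> A} => f i)); first exact: snd_cont.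
  exact: proj_cont.
- move=> [w b]; exists (w, liftI \o b); rewrite /q /=; congr pair.
  by apply: functional_extensionality_dep => i /=; rewrite kI_lift.
- have -> : (fun p : (Omega n * {ptws 'I_n -> ImA})%type => @ops _ ImA n p.1 p.2) \o q
     = kI \o (fun p : (Omega n * {ptws 'I_n -> A})%type => @ops _ A n p.1 p.2).
    apply: funext => -[w b] /=; apply: val_inj => /=; apply: kcong => i /=.
    by rewrite liftI_spec.
  apply: (@cont_comp _ _ _ (fun p : (Omega n * {ptws 'I_n -> A})%type => @ops _ A n p.1 p.2) kI).
    exact: opsA.
  exact: kI_cont.
Qed.

End Image.

Lemma hom_cong Omega (A B : talg Omega) (k : A -> B) : is_hom k ->
  forall n (w : Omega n) (a b : 'I_n -> A),
  (forall i, k (a i) = k (b i)) -> k (ops w a) = k (ops w b).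
Proof.
move=> hk n w a b e; rewrite !hk; congr ops.
by apply: funext => i /=; exact: e.
Qed.

Lemma val_hom Omega (A B : talg Omega) (k : A -> B) : is_hom k ->
  is_hom (A := ImA k) (B := B) set_val.
Proof.
move=> hk n w a; rewrite -[LHS]/(k (ops w (liftI (k:=k) \o a))) hk; congr ops.
by apply: funext => i /=; rewrite liftI_spec.
Qed.

Lemma factor_hom Omega (A C Q : talg Omega) (q : A -> C) (k : A -> Q) :
  compact [set: A] -> hausdorff_space C ->
  is_hom q -> continuous q -> (forall c, exists x, q x = c) ->
  is_hom k -> continuous k -> (forall x y, q x = q y -> k x = k y) ->
  exists h : C -> Q, [/\ is_hom h, continuous h & forall x, h (q x) = k x].
Proof.
move=> cA hC hq cq sq hk ck qk.
pose lift c := projT1 (cid (sq c)).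
have liftP c : q (lift c) = c by rewrite /lift; case: cid.
have hqk x : k (lift (q x)) = k x by apply: qk; rewrite liftP.
exists (fun c => k (lift c)); split => //.
- move=> n w a.
  have e : ops w a = q (ops w (lift \o a)).
    by rewrite hq; congr ops; apply: funext => i /=; rewrite liftP.
  rewrite e hqk hk //.
- apply: (closed_map_factor (q := q)) => //.
  have -> : (fun c => k (lift c)) \o q = k by apply: funext => x /=; exact: hqk.
  exact: ck.
Qed.
Section Poly.
Variable Omega : nat -> topologicalType.
Variable A : talg Omega.

Inductive poly : Type :=
  PVar | PConst of A | POp (n : nat) of Omega n & ('I_n -> poly).

HB.instance Definition _ := gen_eqMixin poly.
HB.instance Definition _ := gen_choiceMixin poly.

Fixpoint peval (p : poly) (x : A) : A :=
  match p with
  | PVar => x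
  | PConst c => c
  | POp n w ps => ops w (fun i => peval (ps i) x)
  end.

Fixpoint psubst (p q : poly) : poly :=
  match p with
  | PVar => q
  | PConst c => PConst c
  | POp n w ps => POp w (fun i => psubst (ps i) q)
  end.

Lemma peval_subst p q x : peval (psubst p q) x = peval p (peval q x).
Proof.
elim: p => //= n w ps IH; congr ops; apply: funext => i; exact: IH.
Qed.

Lemma peval_hom (B : talg Omega) (g : A -> B) : is_hom g ->
  forall p x y, g x = g y -> g (peval p x) = g (peval p y).
Proof.
move=> hg; elim=> //= n w ps IH x y gxy; rewrite !hg; congr ops.
apply: funext => i /=; exact: IH.
Qed.

Lemma peval_cont : stone_alg A -> forall p, continuous (peval p).
Proof.
move=> [_ opsA]; elim => /=.
- by move=> x.
- by move=> c x; exact: cst_continuous.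
- move=> n w ps IH.
  have -> : (fun x => ops w (fun i => peval (ps i) x)) =
     (fun pr : (Omega n * {ptws 'I_n -> A})%type => ops pr.1 pr.2) \o
     (fun x => (w, (fun i => peval (ps i) x) : {ptws 'I_n -> A})) by [].
  apply: cont_comp; last exact: opsA.
  apply: pair_cont; first by move=> x; exact: cst_continuous.
  apply: cont_into_prod => i; exact: IH.
Qed.

Variable D : set A.

Definition kD (x : A) : {ptws poly -> bool} := fun p => `[< D (peval p x) >].

Lemma kD_step x y : kD x = kD y -> forall q, kD (peval q x) = kD (peval q y).
Proof.
move=> e q; apply: funext => p; rewrite /kD -!peval_subst.
exact: (congr1 (fun g => g (psubst p q)) e).
Qed.

Lemma kD_cong : forall n (w : Omega n) (a b : 'I_n -> A),
  (forall i, kD (a i) = kD (b i)) -> kD (ops w a) = kD (ops w b).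
Proof.
move=> n w a b e.
pose c m := fun j : 'I_n => if (j < m)%N then b j else a j.
have c0 : c 0%N = a by apply: funext => j; rewrite /c ltn0.
have cn : c n = b by apply: funext => j; rewrite /c ltn_ord.
suff H : forall m, kD (ops w a) = kD (ops w (c m)) by rewrite (H n) cn.
elim=> [|m IH]; first by rewrite c0.
rewrite IH; case: (ltnP m n) => [lt|ge]; last first.
  congr (kD (ops w _)); apply: funext => j; rewrite /c.
  by rewrite (leq_trans (ltn_ord j) ge) (leq_trans (ltn_ord j) (leq_trans ge (leqnSn _))).
pose i0 := Ordinal lt.
pose q := POp w (fun j => if j == i0 then PVar else PConst (c m j)).
have e1 : peval q (a i0) = ops w (c m).
  rewrite /=; congr ops; apply: funext => j.
  case: (eqVneq j i0) => [->|//].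
  by rewrite /c /= ltnn.
have e2 : peval q (b i0) = ops w (c m.+1).
  rewrite /=; congr ops; apply: funext => j.
  case: (eqVneq j i0) => [->|ne].
    by rewrite /c /= ltnSn.
  have jm : (nat_of_ord j == m) = false.
    by apply/negbTE; apply: contra ne => /eqP ej; apply/eqP/val_inj.
  have jm1 : (j < m.+1)%N = (j < m)%N by rewrite ltnS leq_eqVlt jm.
  by rewrite /= /c jm1.
by rewrite -e1 -e2; apply: kD_step; exact: e.
Qed.

Lemma kD_sat (B : talg Omega) (g : A -> B) : is_hom g ->
  (forall x y, g x = g y -> D x -> D y) ->
  forall x y, g x = g y -> kD x = kD y.
Proof.
move=> hg sat x y gxy; apply: funext => p; rewrite /kD.
have g1 := peval_hom hg p gxy.
have -> : D (peval p x) = D (peval p y).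
  by apply: propext; split; apply: sat => //; rewrite g1.
by [].
Qed.

Lemma indicator_cont (T : topologicalType) (C : set T) : clopen C ->
  continuous (fun y => `[< C y >]).
Proof.
move=> [oC cC]; apply/continuousP => U _.
have [Ut|Unt] := pselect (U true); have [Uf|Unf] := pselect (U false).
- have -> : (fun y => `[< C y >]) @^-1` U = setT.
    by apply/seteqP; split => // y _ /=; case: asboolP.
  exact: openT.
- have -> : (fun y => `[< C y >]) @^-1` U = C.
    apply/seteqP; split => y /=; case: asboolP => //.
  exact: oC.
- have -> : (fun y => `[< C y >]) @^-1` U = ~` C.
    apply/seteqP; split => y /=; case: asboolP => //.
  by rewrite openC.
- have -> : (fun y => `[< C y >]) @^-1` U = set0.
    apply/seteqP; split => y /=; case: asboolP => //.
  exact: open0.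
Qed.

Lemma kD_cont : stone_alg A -> clopen D -> continuous kD.
Proof.
move=> sA cD; apply: cont_into_prod => p.
apply: (@cont_comp _ _ _ (peval p) (fun y => `[< D y >])).
  exact: peval_cont.
exact: indicator_cont.
Qed.

Lemma X_hausdorff : hausdorff_space {ptws poly -> bool}.
Proof.
have := @hausdorff_product poly (fun _ => bool) (fun _ => discrete_hausdorff); exact.
Qed.

Lemma X_zd : zero_dimensional {ptws poly -> bool}.
Proof.
have := @zero_dimension_prod poly (fun _ => bool) (fun _ => discrete_zero_dimension); exact.
Qed.

End Poly.
From mathcomp Require Import finmap.
Definition pt_of (T : topologicalType) (x : T) : Type := T.
HB.instance Definition _ (T : topologicalType) (x : T) := Topological.on (pt_of x).
HB.instance Definition _ (T : topologicalType) (x : T) := isPointed.Build (pt_of x) x.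

Lemma compact_cover_np (T : topologicalType) (x : T) (A : set T) :
  compact A -> cover_compact A.
Proof.
move=> cA; have := @compact_cover (pt_of x).
move=> e; have : @compact (pt_of x) A by [].
by rewrite e.
Qed.

Lemma open_neq (T B : topologicalType) (f : T -> B) :
  hausdorff_space B -> continuous f ->
  open [set uv : (T * T)%type | f uv.1 <> f uv.2].
Proof.
move=> hB cf; rewrite openE => -[u v] /= ne.
have ne' : f u != f v by apply/eqP.
move: hB; rewrite open_hausdorff => /(_ _ _ ne') [[P Q] /= [Pu Qv] [oP oQ /eqP PQ]].
exists (f @^-1` P, f @^-1` Q) => /=.
  split.
  - apply: cf; apply: open_nbhs_nbhs; split => //; exact/set_mem.
  - apply: cf; apply: open_nbhs_nbhs; split => //; exact/set_mem.
move=> [a b] /= [Pa Qb] e; have : (P `&` Q) (f a) by split => //; rewrite e.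
by rewrite PQ.
Qed.

Lemma separate_clopen (Omega : nat -> topologicalType) (SS : talg Omega -> Prop)
  (HSS : stone_pseudovariety SS) (S : talg Omega) (HS : stone_alg S)
  (res : residually SS S) (x0 y0 : S) (ne : x0 <> y0) (D : set S) (cD : clopen D) :
  exists (B : talg Omega) (f : S -> B),
    [/\ SS B, is_hom f, continuous f & forall x y, D x -> ~ D y -> f x <> f y].
Proof.
case: HSS => _ SSstone _ _ SSprod.
case: HS => [[cS hS zS] _].
have pick : forall p : (S * S)%type, exists (B : talg Omega) (f : S -> B),
    [/\ SS B, is_hom f, continuous f & p.1 <> p.2 -> f p.1 <> f p.2].
  move=> [x y] /=; have [->|nxy] := pselect (x = y).
    by have [B [f [? ? ? _]]] := res _ _ ne; exists B, f.
  by have [B [f [? ? ? ?]]] := res _ _ nxy; exists B, f.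
pose Bf p := projT1 (cid (pick p)).
pose ff p : S -> Bf p := projT1 (cid (projT2 (cid (pick p)))).
have ffP p : [/\ SS (Bf p), is_hom (ff p), continuous (ff p)
                & p.1 <> p.2 -> ff p p.1 <> ff p p.2].
  by rewrite /ff /Bf; case: (cid (projT2 (cid (pick p)))).
case: cD => oD clD.
have cK : compact (D `*` ~` D).
  apply: compact_setX.
    exact: (subclosed_compact clD cS).
  exact: (subclosed_compact (open_closedC oD) cS).
move/(compact_cover_np (x0, y0)): cK.
move=> /(_ _ (D `*` ~` D) (fun p => [set uv : (S * S)%type | ff p uv.1 <> ff p uv.2])).
case.
- move=> p _; apply: open_neq; last by case: (ffP p).
  by case: (ffP p) => /SSstone [[]].
- move=> [x y] [/= Dx nDy]; exists (x, y) => //=.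
  case: (ffP (x, y)) => _ _ _; apply => /= exy; apply: nDy; by rewrite -exy.
move=> F Fsub cov.
pose A := fun i : F => Bf (val i).
pose f := (fun s => (fun i : F => ff (val i) s)) : S -> prod_alg A.
exists (prod_alg A), f; split.
- by apply: SSprod => i; case: (ffP (val i)).
- move=> n w a; apply: functional_extensionality_dep => i /=.
  case: (ffP (val i)) => _ hh _ _; by rewrite /f hh.
- apply: cont_into_prod => i; by case: (ffP (val i)).
- move=> x y Dx nDy; have [p Fp /= sep] := cov (x, y) (conj Dx nDy).
  move=> fxy; apply: sep.
  have := congr1 (fun g : prod_alg A => g (FSetSub Fp)) fxy.
  by [].
Qed.
Lemma clopen_sep (T : topologicalType) : hausdorff_space T -> zero_dim T ->
  forall x y : T, x <> y -> exists U, [/\ clopen U, U x & ~ U y].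
Proof.
move=> hT zT x y xy.
have oU : open (~` [set y]).
  rewrite openC; apply: accessible_closed_set1; exact: hausdorff_accessible.
have [V [cV Vx VU]] := zT x _ oU xy.
by exists V; split => // Vy; exact: (VU _ Vy).
Qed.

Lemma zero_dim_zd (T : topologicalType) : hausdorff_space T -> zero_dim T ->
  zero_dimensional T.
Proof.
move=> hT zT x y /eqP xy; exact: clopen_sep.
Qed.

Theorem theorem5p12 (Omega : nat -> topologicalType)
  (HOmega : forall n, stone_space (Omega n))
  (SS : talg Omega -> Prop) (HSS : stone_pseudovariety SS)
  (S T : talg Omega) (phi : S -> T)
  (HS : stone_alg S) (HT : stone_alg T)
  (hom_phi : is_hom phi) (cont_phi : continuous phi)
  (onto_phi : forall t : T, exists s : S, phi s = t) :
  residually SS S -> residually SS T.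
Proof.
move=> res t1 t2 ne.
have [s1 e1] := onto_phi t1; have [s2 e2] := onto_phi t2.
have ns : s1 <> s2 by move=> es; apply: ne; rewrite -e1 -e2 es.
have [[cT hT zT] _] := HT.
have [[cS hS zS] _] := HS.
have [C [cC Ct1 nCt2]] := clopen_sep hT zT ne.
pose D := phi @^-1` C.
have cD : clopen D by exact: preimage_clopen.
have [B [f [SB hf cf sepf]]] := separate_clopen HSS HS res ns cD.
have HSS' := HSS; case: HSS' => _ SSstone SSimg SSsub _.
have [[cB hB zB] _] := SSstone _ SB.
pose k := kD D.
have kcong := @kD_cong Omega S D.
pose Q := ImA k.
have sQ : stone_alg Q.
  apply: ImA_stone => //.
  - exact: X_hausdorff.
  - exact: X_zd.
  - exact: kD_cont.
have fcong := hom_cong hf.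
pose B' := ImA f.
have sB' : stone_alg B'.
  apply: ImA_stone => //; exact: zero_dim_zd.
have SB' : SS B'.
  apply: (SSsub B B' set_val) => //.
  - exact: val_hom.
  - exact: val_cont.
have satf : forall x y, f x = f y -> k x = k y.
  apply: (kD_sat hf) => x y fxy Dx; apply: contrapT => nDy.
  exact: (sepf x y Dx nDy fxy).
have [[_ hB' _] _] := sB'.
have c1 : forall x y, kI f x = kI f y -> kI k x = kI k y.
  by move=> x y /(congr1 set_val) /= /satf e; apply: val_inj.
have [h [hh ch hq]] := @factor_hom Omega S B' Q (kI f) (kI k) cS
   hB' (kI_hom fcong) (kI_cont cf) (kI_onto (k:=f))
   (kI_hom kcong) (kI_cont (kD_cont HS cD)) c1.
have SQ : SS Q.
  apply: (SSimg B' Q h) => // y.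
  have [x <-] := kI_onto y; exists (kI f x); exact: hq.
have satphi : forall x y, phi x = phi y -> k x = k y.
  by apply: (kD_sat hom_phi) => x y pxy; rewrite /D /preimage /= pxy.
have c2 : forall x y, phi x = phi y -> kI k x = kI k y.
  by move=> x y /satphi e; apply: val_inj.
have [g [hg cg gq]] := @factor_hom Omega S T Q phi (kI k) cS
   hT hom_phi cont_phi onto_phi
   (kI_hom kcong) (kI_cont (kD_cont HS cD)) c2.
exists Q, g; split => //.
rewrite -e1 -e2 !gq => /(congr1 (fun z : Q => set_val z (@PVar Omega S))) /=.
have Ds1 : D s1 by rewrite /D /preimage /= e1.
have nDs2 : ~ D s2 by rewrite /D /preimage /= e2.
move=> E; have : `[< D s1 >] = `[< D s2 >] := E.
by rewrite (asboolT Ds1) (asboolF nDs2).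
Qed.
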